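(* (1) In $\mathcal{N}ec$, every morphism $\varphi$ from $(n_1,\dots,n_k)$ to $(m)$ decomposes uniquely as $\varphi=\varphi_1*\dots*\varphi_k$, where each $\varphi_i:\square^{n_i}\to\square^m$ is a morphism of cubical sets (i.e. of $\square$) and $\varphi_1(\alpha)=\alpha$, $\varphi_i(\omega)=\varphi_{i+1}(\alpha)$ for $1\le i\le k-1$, and $\varphi_k(\omega)=\omega$. In particular $m\le n_1+\dots+n_k$. (2) Given a morphism $f:(n_1,\dots,n_k)\to(m_1,\dots,m_l)$ in $\mathcal{N}ec$, there exist a decomposition $(A_1,\dots,A_l)$ of the sequence $(n_1,\dots,n_k)$ into $l$ blocks and morphisms $f_j:A_j\to(m_j)$ in $\mathcal{N}ec$ such that $f=f_1\vee\dots\vee f_l$. This decomposition is unique if, for every $1\le i\le k$, the restriction of $f$ to the $i$-th bead $\square^{n_i}$ is not constant.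
   Context: Cubical sets: presheaves on the category $\square$ with objects $[1]^n$ and morphisms generated by faces $\partial_{i,\epsilon}$ (insert $\epsilon$ at coordinate $i$), degeneracies (delete a coordinate) and negative connections ($\gamma_{i,0}$ replaces $(x_i,x_{i+1})$ by $\max(x_i,x_{i+1})$); $\square^n$ is representable, with vertices the subsets of $\{1,\dots,n\}$, $\alpha=\emptyset$, $\omega=\{1,\dots,n\}$. Double-pointed cubical sets $X_{a,b}$ are cubical sets with two chosen vertices; morphisms preserve both. For $X_{a,b},Y_{u,v}$, $X\vee Y$ is the pushout identifying $b$ with $u$, pointed by $(a,v)$; for double-pointed maps $f,g$, $f\vee g$ is the induced map on wedges. For a cubical set $X$ with vertices $u,v,w$ and maps $f:S_{a,b}\to X_{u,v}$, $g:T_{a',b'}\to X_{v,w}$, $f*g:(S\vee T)_{a,b'}\to X_{u,w}$ is the induced map from the pushout. A necklace, identified with the sequence $(n_1,\dots,n_k)$ of positive integers, is $\square^{n_1}\vee\dots\vee\square^{n_k}$ pointed by the $\alpha$ of the first and the $\omega$ of the last cube; its $i$-th bead is the canonical map $\square^{n_i}\to T$. $\mathcal{N}ec$ is the full subcategory of double-pointed cubical sets on necklaces. A decomposition of a nonempty sequence $(n_1,\dots,n_k)$ into $l$ blocks is a tuple $(A_1,\dots,A_l)$ of nonempty sequences whose concatenation is $(n_1,\dots,n_k)$; each $A_j$ is regarded as a necklace. *)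

(* Defs.v *)
From HB Require Import structures.
From mathcomp Require Import all_boot.
Set Implicit Arguments. Unset Strict Implicit. Unset Printing Implicit Defensive.

(* points of [1]^n are boolean n-tuples (false = 0, true = 1) *)
Definition tup (k : nat) (s : seq bool) : k.-tuple bool :=
  [tuple nth false s j | j < k].

(* set maps [1]^n -> [1]^m (finite functions: Leibniz = extensional equality) *)
Definition cmap (n m : nat) := {ffun n.-tuple bool -> m.-tuple bool}.

Definition cmap_id n : cmap n n := [ffun x => x].
Definition cmap_comp n m p (g : cmap m p) (f : cmap n m) : cmap n p :=
  [ffun x => g (f x)].

(* face: insert e at (0-based) coordinate i, [1]^n -> [1]^(n+1) *)
Definition face n (i : 'I_n.+1) (e : bool) : cmap n n.+1 :=
  [ffun x : n.-tuple bool => tup n.+1 (take i x ++ e :: drop i x)].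
(* degeneracy: delete (0-based) coordinate i, [1]^(n+1) -> [1]^n *)
Definition degen n (i : 'I_n.+1) : cmap n.+1 n :=
  [ffun x : n.+1.-tuple bool => tup n (take i x ++ drop i.+1 x)].
(* negative connection gamma_{i,0}: replace (x_i, x_{i+1}) by max(x_i, x_{i+1}) *)
Definition conn n (i : 'I_n.+1) : cmap n.+2 n.+1 :=
  [ffun x : n.+2.-tuple bool =>
     tup n.+1 (take i x ++ (nth false x i || nth false x i.+1) :: drop i.+2 x)].

Inductive is_cube : forall n m, cmap n m -> Prop :=
| cube_id n : is_cube (cmap_id n)
| cube_face n (i : 'I_n.+1) e : is_cube (face i e)
| cube_degen n (i : 'I_n.+1) : is_cube (degen i)
| cube_conn n (i : 'I_n.+1) : is_cube (conn i)
| cube_comp n m p (g : cmap m p) (f : cmap n m) :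
    is_cube g -> is_cube f -> is_cube (cmap_comp g f).

Definition cube n m := {f : cmap n m | is_cube f}.

Definition ccomp n m p (g : cube m p) (f : cube n m) : cube n p :=
  exist _ (cmap_comp (proj1_sig g) (proj1_sig f))
          (cube_comp (proj2_sig g) (proj2_sig f)).

Definition cconst n d (e : bool) : cmap n d := [ffun _ => [tuple of nseq d e]].

Lemma cube_const n d e : is_cube (cconst n d e).
Proof.
elim: d => [|d IH].
  elim: n => [|n IHn].
    have -> : cconst 0 0 e = cmap_id 0.
      by apply/ffunP => x; rewrite !ffunE; apply: eq_from_tnth; case.
    exact: cube_id.
  have -> : cconst n.+1 0 e = cmap_comp (cconst n 0 e) (degen ord0).
    by apply/ffunP => x; rewrite !ffunE; apply: eq_from_tnth; case.
  by apply: cube_comp; [exact: IHn | exact: cube_degen].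
have -> : cconst n d.+1 e = cmap_comp (face ord0 e) (cconst n d e).
  apply/ffunP => x; rewrite !ffunE; apply: eq_from_tnth => j.
  rewrite tnth_mktuple tnth_nseq take0 drop0 /=.
  case: j => [[|j] Hj] //=. by rewrite nth_nseq -ltnS Hj.
by apply: cube_comp; [exact: cube_face | exact: IH].
Qed.

Definition constc n d e : cube n d := exist _ (cconst n d e) (cube_const n d e).

Definition calpha d : cube 0 d := constc 0 d false.
Definition comega d : cube 0 d := constc 0 d true.

Record psh := Psh { cells : nat -> Type;
                    act : forall n m, cube n m -> cells m -> cells n }.

Definition is_natural (X Y : psh) (F : forall n, cells X n -> cells Y n) :=
  forall n m (g : cube n m) (x : cells X m), F n (act g x) = act g (F m x).

Definition rep (d : nat) : psh :=
  @Psh (fun n => cube n d) (fun n m g f => ccomp f g).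

(* A necklace (n_1,...,n_k) is represented by ns = [:: n_1; ...; n_k].
   Its n-cells are the levelwise pushout (wedge) of the beads: pairs (i, f)
   with f an n-cell of bead i (of dimension nth 0 ns i), where the constant
   cell at alpha of bead i (i > 0) is identified with the constant cell at
   omega of bead i-1.  We use the normal form with the smallest bead index. *)
Definition nbeads (ns : seq nat) := (size ns).-1.+1.
Definition is_alpha n d (f : cube n d) := proj1_sig f == cconst n d false.

Definition pre n := (nat * {d : nat & cube n d})%type.
Definition valid (ns : seq nat) n (p : pre n) :=
  [&& p.1 < nbeads ns, tag p.2 == nth 0 ns p.1 &
      (p.1 == 0) || ~~ is_alpha (tagged p.2)].
Definition ncell (ns : seq nat) n := {p : pre n | valid ns p}.

Fixpoint normp (ns : seq nat) n (i : nat) : forall d, cube n d -> pre n :=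
  match i with
  | 0 => fun d f => (0, existT _ d f)
  | i'.+1 => fun d f => if is_alpha f then normp ns i' (constc n (nth 0 ns i') true)
                        else (i'.+1, existT _ d f)
  end.

Lemma valid0 ns n : valid ns (0, existT _ (nth 0 ns 0) (constc n _ false)).
Proof. by rewrite /valid /= eqxx. Qed.
Definition ncell0 ns n : ncell ns n := exist (fun p => valid ns p) _ (@valid0 ns n).

(* the class of a representative (i, f); (ncell0 is only a never-used default) *)
Definition mkcell ns n (i : nat) d (f : cube n d) : ncell ns n :=
  insubd (ncell0 ns n) (normp ns i f).

Definition neck (ns : seq nat) : psh :=
  @Psh (ncell ns)
       (fun n m g c => mkcell ns (proj1_sig c).1 (ccomp (tagged (proj1_sig c).2) g)).

(* i-th bead []^(n_i) -> necklace (0-based index) *)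
Definition bead (ns : seq nat) (i : nat) n (f : cube n (nth 0 ns i)) : ncell ns n :=
  mkcell ns i f.
Arguments bead ns i {n} f.
Definition nalpha ns : ncell ns 0 := bead ns 0 (calpha _).
Definition nomega ns : ncell ns 0 := bead ns (size ns).-1 (comega _).

Definition is_nec_map (ns ms : seq nat) (F : forall n, ncell ns n -> ncell ms n) :=
  [/\ is_natural (X := neck ns) (Y := neck ms) F,
      F 0 (nalpha ns) = nalpha ms & F 0 (nomega ns) = nomega ms].

(* inclusion of a sub-necklace A (a block of ns starting at bead index off)
   into ns : the cell (i, f) of A goes to the cell (off + i, f) of ns *)
Definition shift (A ns : seq nat) (off : nat) n (c : ncell A n) : ncell ns n :=
  mkcell ns (off + (proj1_sig c).1) (tagged (proj1_sig c).2).

Definition bead_const (ns ms : seq nat) (F : forall n, ncell ns n -> ncell ms n) i :=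
  exists v : ncell ms 0, forall n (x : cube n (nth 0 ns i)),
      F n (bead ns i x) = act (p := neck ms) (constc n 0 false) v.

Definition block_off (As : seq (seq nat)) (j : nat) := sumn (map size (take j As)).

(* Main.v *)
Require Import Defs.
From mathcomp Require Import all_boot zify.
From Stdlib Require Import ProofIrrelevance Eqdep_dec.
From Stdlib Require PeanoNat.
Set Implicit Arguments. Unset Strict Implicit. Unset Printing Implicit Defensive.

Lemma cube_eq n d (x y : cube n d) : proj1_sig x = proj1_sig y -> x = y.
Proof.
case: x y => [x Hx] [y Hy] /= E; subst y; congr exist; apply: proof_irrelevance.
Qed.

Lemma existT_cube_inj n d (x y : cube n d) :
  existT (fun d => cube n d) d x = existT _ d y -> x = y.
Proof. exact: (inj_pair2_eq_dec _ PeanoNat.Nat.eq_dec). Qed.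

Lemma ccomp_const n m d e (g : cube n m) : ccomp (constc m d e) g = constc n d e.
Proof. by apply: cube_eq; apply/ffunP => x; rewrite /= !ffunE. Qed.

Definition idc d : cube d d := exist _ (cmap_id d) (cube_id d).

Lemma ccomp_idl n d (x : cube n d) : ccomp (idc d) x = x.
Proof. by apply: cube_eq; apply/ffunP => y; rewrite /= !ffunE. Qed.

Lemma alpha_comp n m d (y : cube m d) (g : cube n m) :
  is_alpha y -> is_alpha (ccomp y g).
Proof.
rewrite /is_alpha => /eqP E; apply/eqP; apply/ffunP => x.
by rewrite /= !ffunE E ffunE.
Qed.

Lemma const_neq n d e e' : 0 < d -> e != e' -> cconst n d e != cconst n d e'.
Proof.
move=> Hd Hee; apply/negP => /eqP /ffunP /(_ [tuple of nseq n false]).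
rewrite !ffunE => /(congr1 (fun t : d.-tuple bool => nth false t 0)) /=.
case: d Hd => //= d _ E; by rewrite E eqxx in Hee.
Qed.

Lemma is_alpha_omega n d : 0 < d -> is_alpha (constc n d true) = false.
Proof. by move=> Hd; apply/negbTE; apply: const_neq. Qed.

Definition recast n d d' (y : cube n d) : cube n d' :=
  match PeanoNat.Nat.eq_dec d d' with
  | left e => eq_rect d (cube n) y d' e
  | right _ => constc n d' false end.

Lemma recast_id n d (y : cube n d) : recast d y = y.
Proof.
rewrite /recast; case: PeanoNat.Nat.eq_dec => // e.
by rewrite (UIP_dec PeanoNat.Nat.eq_dec e erefl).
Qed.

Definition np ns n (p : pre n) : pre n := normp ns p.1 (tagged p.2).
Definition mkp ns n (p : pre n) : ncell ns n := mkcell ns p.1 (tagged p.2).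
Definition actp n m (g : cube n m) (p : pre m) : pre n :=
  (p.1, existT _ (tag p.2) (ccomp (tagged p.2) g)).

Lemma actE ns n m (g : cube n m) (c : ncell ns m) :
  act (p := neck ns) g c = mkp ns (actp g (proj1_sig c)).
Proof. by []. Qed.

Lemma mkpE ns n (p : pre n) : mkp ns p = insubd (ncell0 ns n) (np ns p).
Proof. by []. Qed.

Lemma normpS ns n i d (y : cube n d) :
  normp ns i.+1 y = if is_alpha y then normp ns i (constc n (nth 0 ns i) true)
                    else (i.+1, existT _ d y).
Proof. by []. Qed.

Lemma np_act ns n m (g : cube n m) (p : pre m) :
  np ns (actp g (np ns p)) = np ns (actp g p).
Proof.
case: p => i [d y]; rewrite /np /=.
elim: i d y => [|i IH] d y //=.
case: ifP => Ha.
  rewrite (IH _ (constc m (nth 0 ns i) true)) /= ccomp_const.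
  by rewrite (alpha_comp g Ha).
by [].
Qed.

Lemma np_valid ns n (p : pre n) :
  p.1 < nbeads ns -> tag p.2 = nth 0 ns p.1 -> valid ns (np ns p).
Proof.
case: p => i [d y]; rewrite /np /=.
elim: i d y => [|i IH] d y /= Hi Hd.
  by apply/and3P; split => //=; apply/eqP.
case: ifP => Ha.
  by apply: IH => //; apply: ltnW.
by apply/and3P; split => //=; [apply/eqP | rewrite Ha].
Qed.

Lemma np_id ns n (p : pre n) : valid ns p -> np ns p = p.
Proof.
case: p => [[|i] [d y]]; rewrite /np /valid //= => /and3P [_ _ Ha].
by rewrite (negbTE Ha).
Qed.

Lemma val_mkp ns n (p : pre n) :
  p.1 < nbeads ns -> tag p.2 = nth 0 ns p.1 -> proj1_sig (mkp ns p) = np ns p.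
Proof. by move=> H1 H2; rewrite mkpE insubdK //; apply: np_valid. Qed.

Lemma mkp_val ns n (c : ncell ns n) : mkp ns (proj1_sig c) = c.
Proof.
rewrite mkpE np_id; first exact: valKd.
exact: (proj2_sig c).
Qed.

Lemma act_mkp ns n m (g : cube n m) (p : pre m) :
  p.1 < nbeads ns -> tag p.2 = nth 0 ns p.1 ->
  act (p := neck ns) g (mkp ns p) = mkp ns (actp g p).
Proof.
move=> H1 H2; rewrite actE val_mkp // !mkpE; congr insubd.
exact: np_act.
Qed.

Lemma valid_lt ns n (c : ncell ns n) : (proj1_sig c).1 < nbeads ns.
Proof. by case/and3P: (proj2_sig c). Qed.
Lemma valid_tag ns n (c : ncell ns n) : tag (proj1_sig c).2 = nth 0 ns (proj1_sig c).1.
Proof. by case/and3P: (proj2_sig c) => _ /eqP. Qed.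

Lemma nbeadsE (ns : seq nat) : ns != [::] -> nbeads ns = size ns.
Proof. by case: ns. Qed.

Lemma npE ns n i d (y : cube n d) : all (fun d => 0 < d) ns -> i <= size ns ->
  np ns (i, existT _ d y) =
  if (0 < i) && is_alpha y then (i.-1, existT _ _ (constc n (nth 0 ns i.-1) true))
  else (i, existT _ d y).
Proof.
move=> Hpos; rewrite /np /=; case: i => [|i] //= Hi.
case: ifP => // _; case: i Hi => [|i] Hi //=.
rewrite is_alpha_omega //.
by move/allP: Hpos; apply; apply: mem_nth.
Qed.


Lemma tupE k (s : seq bool) : size s = k -> val (tup k s) = s.
Proof.
move=> Hs; apply: (@eq_from_nth _ false); first by rewrite size_tuple.
move=> j; rewrite size_tuple => Hj.
by rewrite -[LHS](tnth_nth false (tup k s) (Ordinal Hj)) /tup tnth_mktuple.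
Qed.

Definition leS (s t : seq bool) := forall j, nth false s j ==> nth false t j.

Lemma leS_take i s t : leS s t -> leS (take i s) (take i t).
Proof.
move=> H j; case: (ltnP j i) => Hj; first by rewrite !nth_take.
rewrite nth_default // size_take; case: ltnP => // Hs; exact: leq_trans Hs Hj.
Qed.
Lemma leS_drop i s t : leS s t -> leS (drop i s) (drop i t).
Proof. by move=> H j; rewrite !nth_drop. Qed.
Lemma leS_cat s1 s2 t1 t2 : size s1 = size t1 -> leS s1 t1 -> leS s2 t2 ->
  leS (s1 ++ s2) (t1 ++ t2).
Proof. by move=> Hs H1 H2 j; rewrite !nth_cat Hs; case: ifP. Qed.
Lemma leS_cons a b s t : (a ==> b) -> leS s t -> leS (a :: s) (b :: t).
Proof. by move=> Hab H; rewrite /leS; case. Qed.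
Lemma leS_nth s t i : leS s t -> nth false s i ==> nth false t i.
Proof. by []. Qed.

Definition dist (s t : seq bool) := count (fun p => p.1 != p.2) (zip s t).

Lemma dist_cat s1 s2 t1 t2 : size s1 = size t1 ->
  dist (s1 ++ s2) (t1 ++ t2) = dist s1 t1 + dist s2 t2.
Proof. by move=> H; rewrite /dist zip_cat // count_cat. Qed.

Lemma dist_cons a b s t : dist (a :: s) (b :: t) = (a != b) + dist s t.
Proof. by []. Qed.

Lemma dist_tri s t u : size s = size t -> size t = size u ->
  dist s u <= dist s t + dist t u.
Proof.
elim: s t u => [|a s IH] [|b t] [|c u] //= [H1] [H2].
rewrite !dist_cons; have := IH _ _ H1 H2.
by case: a; case: b; case: c => /=; lia.
Qed.

Lemma dist_nseq k : dist (nseq k false) (nseq k true) = k.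
Proof. by elim: k => //= k IH; rewrite dist_cons IH. Qed.

Lemma dist_le_size s t : dist s t <= size s.
Proof. rewrite /dist; apply: leq_trans (count_size _ _) _; rewrite size_zip; exact: geq_minl. Qed.

Lemma dist_take_drop i s t : size s = size t ->
  dist s t = dist (take i s) (take i t) + dist (drop i s) (drop i t).
Proof.
move=> H; rewrite -{1}(cat_take_drop i s) -{1}(cat_take_drop i t) dist_cat //.
by rewrite !size_take H.
Qed.

Definition mono n m (f : cmap n m) :=
  forall x y : n.-tuple bool, leS x y -> leS (f x) (f y).
Definition lip n m (f : cmap n m) :=
  forall x y : n.-tuple bool, dist (f x) (f y) <= dist x y.

Lemma face_val n (i : 'I_n.+1) e (x : n.-tuple bool) :
  val (face i e x) = take i x ++ e :: drop i x.
Proof.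
rewrite ffunE tupE // size_cat /= size_take size_drop size_tuple.
have Hi := ltn_ord i; case: ltnP => ?; lia.
Qed.

Lemma degen_val n (i : 'I_n.+1) (x : n.+1.-tuple bool) :
  val (degen i x) = take i x ++ drop i.+1 x.
Proof.
rewrite ffunE tupE // size_cat size_take size_drop size_tuple.
have Hi := ltn_ord i; case: ltnP => ?; lia.
Qed.

Lemma conn_val n (i : 'I_n.+1) (x : n.+2.-tuple bool) :
  val (conn i x) = take i x ++ (nth false x i || nth false x i.+1) :: drop i.+2 x.
Proof.
rewrite ffunE tupE // size_cat /= size_take size_drop size_tuple.
have Hi := ltn_ord i; case: ltnP => ?; lia.
Qed.

Lemma cube_mono_lip n m (f : cmap n m) : is_cube f -> mono f /\ lip f.
Proof.
elim => {n m f}.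
- by move=> n; split => x y; rewrite !ffunE.
- move=> n i e; split => x y.
    rewrite !face_val => H; apply: leS_cat; first by rewrite !size_take !size_tuple.
      exact: leS_take.
    by apply: leS_cons; [case: e | exact: leS_drop].
  rewrite !face_val dist_cat; last by rewrite !size_take !size_tuple.
  rewrite dist_cons eqxx add0n -dist_take_drop //; by rewrite !size_tuple.
- move=> n i; split => x y.
    rewrite !degen_val => H; apply: leS_cat; first by rewrite !size_take !size_tuple.
      exact: leS_take.
    exact: leS_drop.
  rewrite !degen_val dist_cat; last by rewrite !size_take !size_tuple.
  rewrite (dist_take_drop i (s := x) (t := y)); last by rewrite !size_tuple.
  rewrite leq_add2l.
  have Hi : i < n.+1 by apply: leq_trans (ltn_ord i) _.
  rewrite (drop_nth false (s := x) (n := i)) ?size_tuple //.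
  rewrite (drop_nth false (s := y) (n := i)) ?size_tuple // dist_cons.
  exact: leq_addl.
- move=> n i; split => x y.
    rewrite !conn_val => H; apply: leS_cat; first by rewrite !size_take !size_tuple.
      exact: leS_take.
    apply: leS_cons; last exact: leS_drop.
    by have := H i; have := H i.+1; do 4 case: nth.
  rewrite !conn_val dist_cat; last by rewrite !size_take !size_tuple.
  rewrite (dist_take_drop i (s := x) (t := y)); last by rewrite !size_tuple.
  rewrite leq_add2l.
  have Hi : i < n.+2 by apply: leq_trans (ltn_ord i) _.
  have Hi1 : i.+1 < n.+2 by rewrite ltnS (ltn_ord i).
  rewrite (drop_nth false (s := x) (n := i)) ?size_tuple //.
  rewrite (drop_nth false (s := y) (n := i)) ?size_tuple //.
  rewrite (drop_nth false (s := x) (n := i.+1)) ?size_tuple //.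
  rewrite (drop_nth false (s := y) (n := i.+1)) ?size_tuple //.
  rewrite !dist_cons addnA leq_add2r.
  by do 4 case: nth.
- move=> n m p g f _ [Mg Lg] _ [Mf Lf]; split => x y.
    by rewrite !ffunE => H; apply: Mg; apply: Mf.
  by rewrite !ffunE; apply: leq_trans (Lg _ _) (Lf _ _).
Qed.


Lemma cell1 m n (c : ncell [:: m] n) : bead [:: m] 0 (recast m (tagged (proj1_sig c).2)) = c.
Proof.
case: c => [[i [d y]] H] /=.
have /and3P [Hi Hd _] := H; case: i H Hi Hd => // H _ /eqP /= Hd.
subst d; rewrite recast_id.
exact: (mkp_val (exist _ (0, existT _ m y) H)).
Qed.

Lemma bead_inj m n (y z : cube n m) : bead [:: m] 0 y = bead [:: m] 0 z -> y = z.
Proof.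
move/(congr1 (@proj1_sig _ _)).
rewrite -[bead [:: m] 0 y]/(mkp [:: m] (0, existT _ m y)).
rewrite -[bead [:: m] 0 z]/(mkp [:: m] (0, existT _ m z)).
rewrite !val_mkp //= => [[]]; exact: existT_cube_inj.
Qed.

Lemma bead_act ns i n m (x : cube m (nth 0 ns i)) (g : cube n m) :
  i < nbeads ns -> bead ns i (ccomp x g) = act (p := neck ns) g (bead ns i x).
Proof.
move=> Hi; rewrite -[bead ns i x]/(mkp ns (i, existT _ _ x)) act_mkp //.
Qed.

Lemma bead_junction ns i : bead ns i.+1 (calpha _) = bead ns i (comega _).
Proof. by rewrite /bead /mkcell /= /is_alpha eqxx. Qed.

Lemma sumn_take (s : seq nat) i : i < size s ->
  sumn (take i.+1 s) = sumn (take i s) + nth 0 s i.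
Proof. by move=> Hi; rewrite (take_nth 0 Hi) -cats1 sumn_cat /= addn0. Qed.

Theorem part1 :
  (forall (ns : seq nat) (m : nat),
     ns != [::] -> all (fun d => 0 < d) ns -> 0 < m ->
     forall F : forall n, ncell ns n -> ncell [:: m] n,
     is_nec_map F ->
     let P := fun phi : forall i n, cube n (nth 0 ns i) -> cube n m =>
       [/\ forall i, i < size ns -> is_natural (X := rep (nth 0 ns i)) (Y := rep m) (phi i),
           phi 0 0 (calpha _) = calpha m,
           forall i, i.+1 < size ns -> phi i 0 (comega _) = phi i.+1 0 (calpha _),
           phi (size ns).-1 0 (comega _) = comega m &
           forall i n (x : cube n (nth 0 ns i)), i < size ns ->
             F n (bead ns i x) = bead [:: m] 0 (phi i n x)] in
     (exists phi, P phi) /\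
     (forall phi psi, P phi -> P psi ->
        forall i n (x : cube n (nth 0 ns i)), i < size ns -> phi i n x = psi i n x) /\
     m <= sumn ns).
Proof.
move=> ns m Hne Hpos Hm F [Fnat Fa Fo] P.
have Hnb := nbeadsE Hne.
have Hsz : 0 < size ns by move: Hne; case: (ns).
pose phi i n (x : cube n (nth 0 ns i)) : cube n m :=
  recast m (tagged (proj1_sig (F n (bead ns i x))).2).
have key : forall i n x, F n (bead ns i x) = bead [:: m] 0 (phi i n x).
  by move=> i n x; rewrite cell1.
have Pphi : P phi.
  split.
  - move=> i Hi n' m' g x; apply: bead_inj.
    rewrite -key /= bead_act ?Hnb // Fnat key -bead_act //.
  - by apply: bead_inj; rewrite -key.
  - move=> i Hi; apply: bead_inj; rewrite -!key bead_junction //.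
  - by apply: bead_inj; rewrite -key.
  - by move=> i n x _; rewrite key.
split; first by exists phi.
split.
  move=> p1 p2 [_ _ _ _ H1] [_ _ _ _ H2] i n x Hi.
  by apply: bead_inj; rewrite -H1 // -H2.
case: Pphi => Nat A J O _.
pose h i := proj1_sig (phi i _ (idc (nth 0 ns i))).
have Hv : forall i e, i < size ns ->
    proj1_sig (phi i 0 (constc 0 _ e)) [tuple] = h i [tuple of nseq _ e].
  move=> i e Hi.
  have := Nat i Hi 0 _ (constc 0 (nth 0 ns i) e) (idc _).
  rewrite /= ccomp_idl => ->; by rewrite /= ffunE ffunE.
have Hc : forall d e, proj1_sig (constc 0 d e) [tuple] = [tuple of nseq d e].
  by move=> d e; rewrite /= ffunE.
have Hcube : forall i, is_cube (h i) by move=> i; exact: (proj2_sig (phi i _ _)).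
have Hind : forall i, i < size ns ->
   dist (h 0 [tuple of nseq _ false]) (h i [tuple of nseq _ true]) <= sumn (take i.+1 ns).
  elim => [|i IH] Hi.
    rewrite (sumn_take Hi) /= take0 /=.
    case: (cube_mono_lip (Hcube 0)) => _ L; apply: leq_trans (L _ _) _.
    by rewrite dist_nseq.
  rewrite (sumn_take Hi).
  apply: leq_trans (dist_tri (t := h i.+1 [tuple of nseq _ false]) _ _) _; 
    rewrite ?size_tuple //.
  apply: leq_add.
    have E : h i.+1 [tuple of nseq _ false] = h i [tuple of nseq _ true].
      by rewrite -!Hv // ?(ltnW Hi) // -/(calpha _) -/(comega _) J.
    by rewrite E; exact: IH (ltnW Hi).
  case: (cube_mono_lip (Hcube i.+1)) => _ L; apply: leq_trans (L _ _) _.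
  by rewrite dist_nseq.
have Hlast : (size ns).-1 < size ns by rewrite prednK.
have := Hind _ Hlast.
rewrite -Hv // -/(calpha _) A Hc -Hv // -/(comega _) O Hc.
by rewrite /= dist_nseq prednK // take_size.
Qed.


Definition is_omega n d (f : cube n d) := proj1_sig f == cconst n d true.

Lemma recast_alpha n d d' (y : cube n d) : is_alpha y -> recast d' y = constc n d' false.
Proof.
move/eqP=> E; rewrite /recast; case: PeanoNat.Nat.eq_dec => // e.
by subst d'; apply: cube_eq; rewrite /= E.
Qed.

Lemma recast_omega n d (y : cube n d) : is_omega y -> recast d y = constc n d true.
Proof. by move/eqP=> E; rewrite recast_id; apply: cube_eq; rewrite /= E. Qed.

Lemma recast_comp n m d d' (y : cube m d) (g : cube n m) : d = d' ->
  recast d' (ccomp y g) = ccomp (recast d' y) g.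
Proof. by move=> e; subst d'; rewrite !recast_id. Qed.

Lemma recast_const n d d' e : d = d' -> recast d' (constc n d e) = constc n d' e.
Proof. by move=> e'; subst d'; rewrite recast_id. Qed.

Lemma existT_map n d d' (y : cube n d) (y' : cube n d') :
  existT (fun d => cube n d) d y = existT _ d' y' ->
  d = d' /\ forall e, (proj1_sig y == cconst n d e) = (proj1_sig y' == cconst n d' e).
Proof.
move=> E; have Ed := congr1 (@projT1 _ _) E; simpl in Ed; subst d'.
by rewrite (existT_cube_inj E).
Qed.

Lemma alpha_of_omega_comp n d (y : cube n d) :
  is_alpha (ccomp y (constc 0 n true)) -> is_alpha y.
Proof.
rewrite /is_alpha => /eqP /ffunP /(_ [tuple]); rewrite /= !ffunE => E.
have [M _] := cube_mono_lip (proj2_sig y).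
apply/eqP/ffunP => x; rewrite ffunE.
have Hx : leS x [tuple of nseq n true].
  rewrite /leS => j; rewrite /= nth_nseq; case: ltnP => Hj; first by rewrite implybT.
  by rewrite nth_default // size_tuple.
have := M _ _ Hx; rewrite E => H.
apply: val_inj; apply: (@eq_from_nth _ false); first by rewrite !size_tuple.
move=> j _; have := H j; rewrite /= nth_nseq if_same.
by case: nth.
Qed.

Lemma ccomp_idr n d (y : cube n d) : ccomp y (idc n) = y.
Proof. by apply: cube_eq; apply/ffunP => x; rewrite /= !ffunE. Qed.

Definition shiftp n off (p : pre n) : pre n := (off + p.1, p.2).

Lemma np_shift (A ns : seq nat) off n (q : pre n) :
  (forall i, i < size A -> nth 0 A i = nth 0 ns (off + i)) ->
  q.1 < size A ->
  np ns (shiftp off (np A q)) = np ns (shiftp off q).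
Proof.
move=> HA; case: q => i [d y]; rewrite /np /shiftp /=.
elim: i d y => [|i IH] d y //= Hi.
rewrite addnS /=; case: ifP => Ha; last by rewrite /= addnS /= Ha.
rewrite (IH _ _ (ltnW Hi)) /= HA //; last exact: ltnW.
Qed.

Lemma shift_nat (A ns : seq nat) off :
  A != [::] -> ns != [::] ->
  (forall i, i < size A -> nth 0 A i = nth 0 ns (off + i)) ->
  off + size A <= size ns ->
  is_natural (X := neck A) (Y := neck ns) (shift ns off).
Proof.
move=> HAne Hne HA Hsz n m g c.
have H1 := valid_lt c; have H2 := valid_tag c.
rewrite (nbeadsE HAne) in H1.
rewrite /shift actE val_mkp //; last by rewrite nbeadsE.
change (mkp ns (shiftp off (np A (actp g (proj1_sig c)))) =
  act (p := neck ns) g (mkp ns (shiftp off (proj1_sig c)))).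
rewrite act_mkp; first last.
- by rewrite /= H2 HA.
- by rewrite nbeadsE //= (leq_trans _ Hsz) // ltn_add2l.
by rewrite !mkpE np_shift.
Qed.

Lemma predn_neq j : 0 < j -> (j.-1 == j) = false.
Proof. by move=> H; apply/eqP; lia. Qed.
Lemma predn_neq' j : 0 < j -> (j == j.-1) = false.
Proof. by move=> H; apply/eqP; lia. Qed.
Lemma ltn_pred_self j : (j < j.-1) = false.
Proof. by apply/negbTE; rewrite -leqNgt leq_pred. Qed.

Definition projp (ms : seq nat) j n (p : pre n) : pre n :=
  (0, existT _ (nth 0 ms j)
        (if p.1 == j then recast (nth 0 ms j) (tagged p.2)
         else constc n (nth 0 ms j) (j < p.1))).
Definition proj (ms : seq nat) j n (c : ncell ms n) : ncell [:: nth 0 ms j] n :=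
  mkp [:: nth 0 ms j] (projp ms j (proj1_sig c)).
Arguments proj ms j {n} c.

Lemma proj_nat ms j : ms != [::] -> all (fun d => 0 < d) ms ->
  is_natural (X := neck ms) (Y := neck [:: nth 0 ms j]) (@proj ms j).
Proof.
move=> Hne Hpos n m g c.
have H1 := valid_lt c; have H2 := valid_tag c.
rewrite /proj actE val_mkp //.
rewrite act_mkp //.
rewrite (nbeadsE Hne) in H1.
case: c H1 H2 => [[i [d y]] Hc] /= H1 H2; subst d.
rewrite npE //; last exact: ltnW.
congr mkp; rewrite /projp /actp /=.
case: andP => [[Hi Ha] | Hna] /=.
- case: (eqVneq i.-1 j) => [Ej | Nj].
    rewrite -Ej predn_neq' //.
    subst j; rewrite recast_const // ccomp_const //=.
    by have -> : i.-1 < i by lia.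
  case: (eqVneq i j) => [Eij | Nij].
    subst j; rewrite -recast_comp // recast_alpha //.
    by rewrite ltn_pred_self.
  rewrite ccomp_const.
  have -> : (j < i.-1) = (j < i) by move/eqP: Nj; move/eqP: Nij; move: Hi; case: ltnP; case: ltnP; lia.
  by [].
- case: eqP => [Eij|_]; last by rewrite ccomp_const.
  by subst j; rewrite recast_comp.
Qed.

Lemma proj_mk ms j n d (y : cube n d) : ms != [::] -> all (fun d => 0 < d) ms ->
  j < size ms -> d = nth 0 ms j ->
  proj ms j (mkp ms (j, existT _ d y)) = mkp [:: nth 0 ms j] (0, existT _ _ (recast (nth 0 ms j) y)).
Proof.
move=> Hne Hpos Hj Hd; rewrite /proj val_mkp ?nbeadsE //.
rewrite npE //; last exact: ltnW.
case: andP => [[Hi Ha] | _]; rewrite /projp /= ?eqxx //.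
by rewrite predn_neq // ltn_pred_self recast_alpha.
Qed.

Lemma shift_proj ms j n d (y : cube n d) : ms != [::] -> all (fun d => 0 < d) ms ->
  j < size ms -> d = nth 0 ms j ->
  shift ms j (proj ms j (mkp ms (j, existT _ d y))) = mkp ms (j, existT _ d y).
Proof.
move=> Hne Hpos Hj Hd; rewrite proj_mk //.
rewrite /shift val_mkp //= addn0; subst d; by rewrite recast_id.
Qed.

Lemma shift1_inj ms j n (a b : ncell [:: nth 0 ms j] n) : ms != [::] -> all (fun d => 0 < d) ms ->
  j < size ms -> shift ms j a = shift ms j b -> a = b.
Proof.
move=> Hne Hpos Hj.
have cellE : forall c : ncell [:: nth 0 ms j] n, exists y : cube n (nth 0 ms j),
    c = mkp [:: nth 0 ms j] (0, existT _ _ y) /\ shift ms j c = mkp ms (j, existT _ _ y).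
  move=> [[i [d y]] Hc]; have /and3P [Hi Hd _] := Hc.
  case: i Hc Hi Hd => // Hc _ /eqP /= Hd; subst d.
  exists y; split; first by rewrite -(mkp_val (exist (fun p => valid [:: nth 0 ms j] p) _ Hc)).
  by rewrite /shift addn0.
have [ya [-> ->]] := cellE a; have [yb [-> ->]] := cellE b.
move=> E; suff -> : ya = yb by [].
move: E; move/(congr1 (@proj1_sig _ _)); rewrite !val_mkp ?nbeadsE // !npE //; try exact: ltnW.
case: andP => [[Hi Ha]|Hna]; case: andP => [[Hi' Hb]|Hnb].
- move=> _; apply: cube_eq.
  by move: Ha Hb; rewrite /is_alpha => /eqP -> /eqP ->.
- by case=> E _; move: Hi E; lia.
- by case=> E _; move: Hi' E; lia.
- by case=> /existT_cube_inj ->.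
Qed.

Definition blockJ (As : seq (seq nat)) (J : nat -> nat) :=
  forall j i, j < size As -> i < size (nth [::] As j) -> J (block_off As j + i) = j.

Lemma block_off0 As : block_off As 0 = 0. Proof. by rewrite /block_off take0. Qed.
Lemma block_offS A As j : block_off (A :: As) j.+1 = size A + block_off As j.
Proof. by []. Qed.

Lemma blocks_uniq As : forall Bs J, flatten As = flatten Bs -> size As = size Bs ->
  all (fun A => A != [::]) As -> all (fun A => A != [::]) Bs ->
  blockJ As J -> blockJ Bs J -> As = Bs.
Proof.
elim: As => [|A As IH] [|B Bs] J //= Ef [Es] /andP [HA HAs] /andP [HB HBs] JA JB.
have JA0 : forall i, i < size A -> J i = 0 by move=> i Hi; exact: (JA 0 i).
have JB0 : forall i, i < size B -> J i = 0 by move=> i Hi; exact: (JB 0 i).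
have JA1 : blockJ As (fun i => (J (size A + i)).-1).
  by move=> j i Hj Hi; rewrite addnA -block_offS (JA j.+1 i).
have JB1 : blockJ Bs (fun i => (J (size B + i)).-1).
  by move=> j i Hj Hi; rewrite addnA -block_offS (JB j.+1 i).
have next : forall (A B : seq nat) As Bs, A ++ flatten As = B ++ flatten Bs ->
    all (fun A => A != [::]) As -> blockJ (A :: As) J -> (forall i, i < size B -> J i = 0) ->
    size A < size B -> False.
  move=> A' B' As' Bs' E' Hne' JA' JB' Hlt.
  case: As' E' Hne' JA' => [|A2 As2] E' Hne' JA'.
    by move: (congr1 size E'); rewrite /= cats0 size_cat => H; move: Hlt; rewrite H; lia.
  have HA2 : 0 < size A2 by case/andP: Hne'; case: (A2).
  have := JA' 1 0 isT HA2; rewrite /block_off /= addn0 addn0 JB' //.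
have Esz : size A = size B.
  case: (ltngtP (size A) (size B)) => // H.
  - by case: (next A B As Bs).
  - by case: (next B A Bs As) => //; move=> j i Hj Hi; exact: JB.
have EAB : A = B.
  by move: (congr1 (take (size A)) Ef); rewrite !take_size_cat.
subst B; congr cons.
apply: (IH Bs (fun i => (J (size A + i)).-1)) => //.
by move: Ef => /eqP; rewrite eqseq_cat // => /andP [_ /eqP].
Qed.

Lemma recast_omega' n d d' (y : cube n d) : d = d' -> is_omega y -> recast d' y = constc n d' true.
Proof. by move=> e; subst d'; apply: recast_omega. Qed.


Lemma val_ms (ms : seq nat) n j d (y : cube n d) : ms != [::] -> all (fun d => 0 < d) ms ->
  j < size ms -> d = nth 0 ms j ->
  proj1_sig (mkp ms (j, existT _ d y)) =
  if (0 < j) && is_alpha y then (j.-1, existT _ _ (constc n (nth 0 ms j.-1) true))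
  else (j, existT _ d y).
Proof.
move=> Hne Hpos Hj Hd; rewrite val_mkp ?nbeadsE // npE //; exact: ltnW.
Qed.

Lemma pos_nth (s : seq nat) j : all (fun d => 0 < d) s -> j < size s -> 0 < nth 0 s j.
Proof. by move/allP=> H Hj; apply: H; apply: mem_nth. Qed.

Lemma is_alpha_idc d : 0 < d -> is_alpha (idc d) = false.
Proof.
move=> Hd; apply/negbTE/negP => /eqP /ffunP /(_ [tuple of nseq d true]).
rewrite !ffunE => /(congr1 (fun t : d.-tuple bool => nth false t 0)) /=.
by case: d Hd.
Qed.

Lemma count_prefix (P : pred nat) k :
  (forall i i', i <= i' -> i' < k -> P i' -> P i) ->
  forall i, i < k -> P i = (i < count P (iota 0 k)).
Proof.
elim: k => [|k IH] // HP i Hi.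
have -> : iota 0 k.+1 = iota 0 k ++ [:: k] by rewrite -addn1 iotaD.
rewrite count_cat /= addn0.
have HP' : forall i i', i <= i' -> i' < k -> P i' -> P i.
  by move=> a b Hab Hb; apply: HP => //; apply: ltnW.
case Pk: (P k).
  have Hall : all P (iota 0 k).
    apply/allP => x; rewrite mem_iota => /andP [_ Hx].
    by apply: (HP x k) => //; apply: ltnW.
  move: Hall; rewrite all_count => /eqP ->; rewrite size_iota addn1 Hi.
  by apply: (HP i k).
rewrite addn0; case: (ltnP i k) => Hik; first exact: IH.
have -> : i = k by apply/eqP; rewrite eqn_leq Hik -ltnS Hi.
rewrite Pk; apply/esym/negbTE; rewrite -leqNgt.
by apply: leq_trans (count_size _ _) _; rewrite size_iota.
Qed.

Lemma nth_flatten_block (As : seq (seq nat)) j i :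
  j < size As -> i < size (nth [::] As j) ->
  block_off As j + i < size (flatten As) /\
  nth 0 (flatten As) (block_off As j + i) = nth 0 (nth [::] As j) i.
Proof.
elim: As j => [|A As IH] [|j] //= Hj Hi.
  rewrite block_off0 add0n size_cat nth_cat Hi; split => //.
  exact: leq_trans Hi (leq_addr _ _).
rewrite block_offS -addnA; have [H1 H2] := IH j Hj Hi.
rewrite size_cat ltn_add2l nth_cat; split => //.
by rewrite ltnNge leq_addr /= addKn.
Qed.

Lemma block_off_succ (As : seq (seq nat)) j : j < size As ->
  block_off As j.+1 = block_off As j + size (nth [::] As j).
Proof.
move=> Hj; rewrite /block_off (take_nth [::] Hj) -cats1 map_cat sumn_cat /=.
by rewrite addn0.
Qed.

Lemma flatten_iota (off : nat -> nat) L :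
  off 0 = 0 -> (forall j, j < L -> off j <= off j.+1) ->
  flatten [seq iota (off j) (off j.+1 - off j) | j <- iota 0 L] = iota 0 (off L).
Proof.
move=> H0 Hmono; elim: L Hmono => [|L IH] Hmono; first by rewrite /= H0.
rewrite -addn1 iotaD map_cat flatten_cat IH; last by move=> j Hj; apply: Hmono; apply: ltnW.
rewrite add0n /= cats0 addn1 -[in RHS](subnKC (Hmono L (ltnSn L))) iotaD add0n //.
Qed.

Lemma shift_nalpha (A ns : seq nat) off : A != [::] ->
  shift ns off (nalpha A) = mkp ns (off, existT _ _ (calpha (nth 0 A 0))).
Proof.
move=> HA; rewrite /shift.
have V : proj1_sig (nalpha A) = (0, existT _ _ (calpha (nth 0 A 0))).
  by rewrite -[nalpha A]/(mkp A (0, existT _ _ (calpha (nth 0 A 0)))) val_mkp // nbeadsE //; case: A HA.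
by rewrite V /= addn0.
Qed.

Lemma shift_nomega (A ns : seq nat) off : A != [::] -> all (fun d => 0 < d) A ->
  shift ns off (nomega A) = mkp ns (off + (size A).-1, existT _ _ (comega (nth 0 A (size A).-1))).
Proof.
move=> HA HApos; rewrite /shift.
have Hs : (size A).-1 < size A by move: HA; case: (A).
have V : proj1_sig (nomega A) = ((size A).-1, existT _ _ (comega (nth 0 A (size A).-1))).
  rewrite -[nomega A]/(mkp A ((size A).-1, existT _ _ (comega (nth 0 A (size A).-1)))) val_mkp ?nbeadsE //.
  rewrite npE //; last exact: ltnW.
  by rewrite /comega is_alpha_omega ?andbF //; apply: pos_nth.
by rewrite V.
Qed.


Section P2.
Local Unset Implicit Arguments.
Variables (ns ms : seq nat).
Hypotheses (Hne : ns != [::]) (Hpos : all (fun d => 0 < d) ns)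
           (Hmne : ms != [::]) (Hmpos : all (fun d => 0 < d) ms).
Variable f : forall n, ncell ns n -> ncell ms n.
Hypothesis Hf : is_nec_map f.

Definition cc i := f (nth 0 ns i) (bead ns i (idc _)).
Definition J i := (proj1_sig (cc i)).1.
Definition D i := tag (proj1_sig (cc i)).2.
Definition G i : cube (nth 0 ns i) (D i) := tagged (proj1_sig (cc i)).2.

Lemma Fnat : is_natural (X := neck ns) (Y := neck ms) f. Proof. by case: Hf. Qed.

Lemma J_lt i : J i < size ms.
Proof. by rewrite /J -(nbeadsE Hmne) (valid_lt (cc i)). Qed.
Lemma D_eq i : D i = nth 0 ms (J i).
Proof. exact: valid_tag. Qed.
Lemma cc_val i : proj1_sig (cc i) = (J i, existT _ (D i) (G i)).
Proof. by rewrite /J /D /G; case: (proj1_sig (cc i)) => a [b y]. Qed.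
Lemma cc_valid i : (J i == 0) || ~~ is_alpha (G i).
Proof. by case/and3P: (proj2_sig (cc i)). Qed.

Lemma nbk : nbeads ns = size ns. Proof. exact: nbeadsE. Qed.
Lemma nbl : nbeads ms = size ms. Proof. exact: nbeadsE. Qed.

Lemma F1 i n (x : cube n (nth 0 ns i)) : i < size ns ->
  f n (bead ns i x) = mkp ms (J i, existT _ (D i) (ccomp (G i) x)).
Proof.
move=> Hi; rewrite -[x]ccomp_idl bead_act ?nbk // Fnat actE cc_val.
by rewrite ccomp_idl.
Qed.

Lemma F1' i n d (y : cube n d) : i < size ns -> d = nth 0 ns i ->
  f n (mkp ns (i, existT _ d y)) =
  mkp ms (J i, existT _ (D i) (ccomp (G i) (recast (nth 0 ns i) y))).
Proof. by move=> Hi Hd; subst d; rewrite recast_id -F1. Qed.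

Lemma val_J i n (y : cube n (D i)) :
  proj1_sig (mkp ms (J i, existT _ (D i) y)) =
  if (0 < J i) && is_alpha y then ((J i).-1, existT _ _ (constc n (nth 0 ms (J i).-1) true))
  else (J i, existT _ (D i) y).
Proof. by rewrite val_ms // ?J_lt // D_eq. Qed.

Lemma Vomega i : i < size ns ->
  proj1_sig (f 0 (bead ns i (comega _))) = (J i, existT _ (D i) (ccomp (G i) (comega _))).
Proof.
move=> Hi; rewrite F1 // val_J.
case: andP => // [[HJ Ha]].
have := cc_valid i; rewrite (alpha_of_omega_comp Ha) orbF => /eqP E.
by rewrite E in HJ.
Qed.

Lemma Valpha i : i < size ns ->
  proj1_sig (f 0 (bead ns i (calpha _))) =
  if (0 < J i) && is_alpha (ccomp (G i) (calpha _))
  then ((J i).-1, existT _ _ (constc 0 (nth 0 ms (J i).-1) true))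
  else (J i, existT _ (D i) (ccomp (G i) (calpha _))).
Proof. by move=> Hi; rewrite F1 // val_J. Qed.

Lemma szpos : 0 < size ns. Proof. by move: Hne; case: (ns). Qed.
Lemma szmpos : 0 < size ms. Proof. by move: Hmne; case: (ms). Qed.

Lemma omega_not_alpha n d : 0 < d ->
  (proj1_sig (constc n d true) == cconst n d false) = false.
Proof. by move=> Hd; apply/negbTE; apply: const_neq. Qed.

Lemma m0pos : 0 < nth 0 ms 0. Proof. exact: pos_nth Hmpos szmpos. Qed.

Lemma V0 : J 0 = 0 /\ is_alpha (ccomp (G 0) (calpha _)).
Proof.
have E : proj1_sig (f 0 (bead ns 0 (calpha _))) = (0, existT _ (nth 0 ms 0) (calpha (nth 0 ms 0))).
  case: Hf => _ Ha _; rewrite -/(nalpha ns) Ha /nalpha /bead.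
  change (proj1_sig (mkp ms (0, existT _ _ (calpha (nth 0 ms 0)))) = (0, existT _ (nth 0 ms 0) (calpha (nth 0 ms 0)))).
  by rewrite val_ms // szmpos.
rewrite Valpha in E; last exact: szpos.
case: andP E => [[HJ Hal]|Hna] E; have /= E1 := congr1 fst E; have /existT_map [E2 E3] := congr1 snd E.
  by have := E3 true; rewrite eqxx /= (negbTE (@const_neq 0 _ false true m0pos isT)).
by split => //; rewrite /is_alpha E3 eqxx.
Qed.

Lemma Vend : J (size ns).-1 = (size ms).-1 /\ is_omega (ccomp (G (size ns).-1) (comega _)).
Proof.
have Hl : (size ms).-1 < size ms by rewrite prednK // szmpos.
have E : proj1_sig (f 0 (bead ns (size ns).-1 (comega _))) =
    ((size ms).-1, existT _ (nth 0 ms (size ms).-1) (comega (nth 0 ms (size ms).-1))).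
  case: Hf => _ _ Ho; rewrite -/(nomega ns) Ho /nomega /bead.
  change (proj1_sig (mkp ms ((size ms).-1, existT _ _ (comega (nth 0 ms (size ms).-1)))) = ((size ms).-1, existT _ (nth 0 ms (size ms).-1) (comega (nth 0 ms (size ms).-1)))).
  rewrite val_ms //.
  by rewrite /comega is_alpha_omega ?andbF //; apply: pos_nth.
rewrite Vomega in E; last by rewrite prednK // szpos.
have /= E1 := congr1 fst E; have /existT_map [E2 E3] := congr1 snd E.
by split => //; rewrite /is_omega E3 eqxx.
Qed.

Lemma Vstep i : i.+1 < size ns -> J i.+1 = J i \/
  (J i.+1 = (J i).+1 /\ is_omega (ccomp (G i) (comega _)) /\ is_alpha (ccomp (G i.+1) (calpha _))).
Proof.
move=> Hi.
have E := congr1 (@proj1_sig _ _) (congr1 (f 0) (bead_junction ns i)).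
rewrite Valpha // Vomega in E; last exact: ltnW.
case: andP E => [[HJ Hal]|Hna] E; have /= E1 := congr1 fst E; have /existT_map [E2 E3] := congr1 snd E.
  right; split; first by rewrite -E1 prednK.
  by split => //; rewrite /is_omega -E3 eqxx.
by left.
Qed.

Lemma J_mono i i' : i <= i' -> i' < size ns -> J i <= J i'.
Proof.
elim: i' => [|i' IH] Hii' Hi'; first by move: Hii'; rewrite leqn0 => /eqP ->.
case: (ltnP i i'.+1) => [Hlt|Hge].
  apply: leq_trans (IH Hlt (ltnW Hi')) _.
  by case: (Vstep i' Hi') => [->|[-> _]].
by have -> : i = i'.+1 by apply/eqP; rewrite eqn_leq Hii' Hge.
Qed.

Definition off j := count (fun i => J i < j) (iota 0 (size ns)).

Lemma off_spec j i : i < size ns -> (J i < j) = (i < off j).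
Proof.
apply: count_prefix => a b Hab Hb Hbj.
exact: leq_ltn_trans (J_mono _ _ Hab Hb) Hbj.
Qed.

Lemma off0 : off 0 = 0.
Proof. by rewrite /off (@eq_count _ _ pred0) ?count_pred0. Qed.

Lemma offl : off (size ms) = size ns.
Proof.
have : all (fun i => J i < size ms) (iota 0 (size ns)).
  by apply/allP => i _; exact: J_lt.
by rewrite /off all_count => /eqP ->; rewrite size_iota.
Qed.

Lemma off_mono j j' : j <= j' -> off j <= off j'.
Proof. by move=> H; apply: sub_count => i /= Hi; apply: leq_trans Hi H. Qed.

Lemma off_le j : off j <= size ns.
Proof. by rewrite /off; apply: leq_trans (count_size _ _) _; rewrite size_iota. Qed.

Lemma Jmem i j : i < size ns -> (J i == j) = (off j <= i < off j.+1).
Proof.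
move=> Hi; rewrite -(off_spec j.+1 i Hi) leqNgt -(off_spec j i Hi) ltnS.
by rewrite -leqNgt eq_sym eqn_leq.
Qed.

Lemma J_surj j : j < size ms -> J (off j) = j /\ off j < size ns.
Proof.
move=> Hj.
have Ht : off j < size ns.
  rewrite ltn_neqAle off_le andbT; apply/eqP => E.
  have Hk : (size ns).-1 < size ns by rewrite prednK // szpos.
  have := off_spec j _ Hk; rewrite E Hk; case: Vend => -> _.
  by move: Hj; case: (size ms) => //= l' Hj; rewrite ltnNge -ltnS Hj.
split => //.
case: (posnP j) => [->|Hj0].
  by rewrite off0; case: V0.
have Ht0 : 0 < off j by rewrite -off_spec ?szpos //; case: V0 => -> _.
have Hge : j <= J (off j) by rewrite leqNgt off_spec // ltnn.
have Hlt : J (off j).-1 < j by rewrite off_spec ?ltn_predL //; apply: leq_ltn_trans (leq_pred _) Ht.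
have := Vstep (off j).-1; rewrite prednK // => /(_ Ht) [E|[E _]].
  by move: Hge; rewrite E; lia.
by move: Hge Hlt; rewrite E; lia.
Qed.

Lemma off_lt j : j < size ms -> off j < off j.+1.
Proof.
move=> Hj; case: (J_surj j Hj) => E Ht.
by have := Jmem _ j Ht; rewrite E eqxx => /esym /andP [].
Qed.

Definition As := [seq [seq nth 0 ns i | i <- iota (off j) (off j.+1 - off j)] | j <- iota 0 (size ms)].

Lemma As_size : size As = size ms.
Proof. by rewrite size_map size_iota. Qed.

Lemma As_nth j : j < size ms ->
  nth [::] As j = [seq nth 0 ns i | i <- iota (off j) (off j.+1 - off j)].
Proof. by move=> Hj; rewrite (nth_map 0) ?size_iota // nth_iota. Qed.

Lemma As_nth_size j : j < size ms -> size (nth [::] As j) = off j.+1 - off j.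
Proof. by move=> Hj; rewrite As_nth // size_map size_iota. Qed.

Lemma As_ne : all (fun A => A != [::]) As.
Proof.
apply/(all_nthP [::]) => j; rewrite As_size => Hj.
rewrite -size_eq0 As_nth_size // subn_eq0 -ltnNge; exact: off_lt.
Qed.

Lemma As_flat : flatten As = ns.
Proof.
have -> : As = map (map (nth 0 ns)) [seq iota (off j) (off j.+1 - off j) | j <- iota 0 (size ms)].
  by rewrite /As -map_comp.
rewrite -map_flatten flatten_iota.
- by rewrite offl -/(mkseq _ _) mkseq_nth.
- exact: off0.
- by move=> j _; apply: off_mono.
Qed.

Lemma As_off j : j <= size ms -> block_off As j = off j.
Proof.
elim: j => [|j IH] Hj; first by rewrite block_off0 off0.
rewrite block_off_succ ?As_size // IH ?(ltnW Hj) // As_nth_size //.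
by rewrite subnKC // off_mono.
Qed.

Lemma As_elem j i : j < size ms -> i < size (nth [::] As j) ->
  nth 0 (nth [::] As j) i = nth 0 ns (off j + i).
Proof.
move=> Hj; rewrite As_nth_size // => Hi.
by rewrite As_nth // (nth_map 0) ?size_iota // nth_iota.
Qed.

Lemma As_J j i : j < size ms -> i < size (nth [::] As j) ->
  J (off j + i) = j /\ off j + i < size ns.
Proof.
move=> Hj; rewrite As_nth_size // => Hi.
have Hk : off j + i < size ns.
  by apply: leq_trans (off_le j.+1); rewrite -ltn_subRL.
split => //; apply/eqP; rewrite Jmem // leq_addr /=.
by rewrite -ltn_subRL.
Qed.

Definition fs j n (c : ncell (nth [::] As j) n) : ncell [:: nth 0 ms j] n :=
  proj ms j (f n (shift ns (block_off As j) c)).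

Lemma As_nth_ne j : j < size ms -> nth [::] As j != [::].
Proof. by move=> Hj; rewrite -size_eq0 As_nth_size // subn_eq0 -ltnNge off_lt. Qed.

Lemma As_pos j : j < size ms -> all (fun d => 0 < d) (nth [::] As j).
Proof.
move=> Hj; apply/allP => x Hx; apply: (allP Hpos); rewrite -As_flat.
apply/flattenP; exists (nth [::] As j) => //; apply: mem_nth; by rewrite As_size.
Qed.

Lemma fs_eq j n c : j < size ms ->
  f n (shift ns (block_off As j) c) = shift ms j (fs j n c).
Proof.
move=> Hj; rewrite /fs.
have HAne := As_nth_ne j Hj.
have Hi' := valid_lt c; have Hd := valid_tag c.
rewrite nbeadsE // in Hi'.
move: c Hi' Hd => [[i' [d y]] Hc] /= Hi' Hd.
have [EJ Hk] := As_J j i' Hj Hi'.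
change (f n (mkp ns (block_off As j + i', existT _ d y)) =
  shift ms j (proj ms j (f n (mkp ns (block_off As j + i', existT _ d y))))).
rewrite As_off ?(ltnW Hj) // F1' //; last by rewrite Hd As_elem.
by rewrite EJ shift_proj // D_eq EJ.
Qed.

Lemma alpha_start j : j < size ms -> is_alpha (ccomp (G (off j)) (calpha _)).
Proof.
move=> Hj; case: (posnP j) => [->|Hj0]; first by rewrite off0; case: V0.
have [EJ Ht] := J_surj j Hj.
have Ht0 : 0 < off j by rewrite -off_spec ?szpos //; case: V0 => -> _.
have Hlt : J (off j).-1 < j by rewrite off_spec ?ltn_predL //; apply: leq_ltn_trans (leq_pred _) Ht.
have := Vstep (off j).-1; rewrite prednK // => /(_ Ht) [E|[_ [_ ->]]] //.
by move: Hlt; rewrite -E EJ ltnn.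
Qed.

Lemma omega_end j : j < size ms ->
  J (off j.+1).-1 = j /\ (off j.+1).-1 < size ns /\ is_omega (ccomp (G (off j.+1).-1) (comega _)).
Proof.
move=> Hj; have Hlt := off_lt j Hj.
have Hp : 0 < off j.+1 by apply: leq_ltn_trans Hlt.
have He : (off j.+1).-1 < size ns by apply: leq_trans (off_le j.+1); rewrite prednK.
have EJ : J (off j.+1).-1 = j.
  by apply/eqP; rewrite Jmem //; apply/andP; split; [rewrite -ltnS prednK | rewrite ltn_predL].
do 2!split => //.
case: (ltngtP (off j.+1) (size ns)) => [Hk||Hk].
- have Hge : j.+1 <= J (off j.+1) by rewrite leqNgt off_spec // ltnn.
  have := Vstep (off j.+1).-1; rewrite prednK // => /(_ Hk) [E|[_ [-> _]]] //.
  by move: Hge; rewrite E EJ ltnn.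
- by move=> H; move: (off_le j.+1); rewrite leqNgt H.
- by rewrite Hk; case: Vend.
Qed.

Lemma fs_nec j : j < size ms -> is_nec_map (fs j).
Proof.
move=> Hj; have HAne := As_nth_ne j Hj.
have HA : forall i, i < size (nth [::] As j) -> nth 0 (nth [::] As j) i = nth 0 ns (block_off As j + i).
  by move=> i Hi; rewrite As_elem // As_off // ltnW.
have Hsz : block_off As j + size (nth [::] As j) <= size ns.
  by rewrite As_off ?(ltnW Hj) // As_nth_size // subnKC ?off_mono // off_le.
split.
- move=> n m g c; rewrite /fs (shift_nat HAne Hne HA Hsz) Fnat.
  exact: (proj_nat j Hmne Hmpos).
- have [EJ Ht] := J_surj j Hj.
  have Hoff : block_off As j = off j := As_off j (ltnW Hj).
  have Hsz0 : 0 < size (nth [::] As j) by rewrite lt0n size_eq0.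
  have E0 : nth 0 (nth [::] As j) 0 = nth 0 ns (off j) by rewrite HA // Hoff addn0.
  rewrite /fs (shift_nalpha _ _ HAne) Hoff (F1' (off j) _ _ (calpha _) Ht E0).
  have HD : D (off j) = nth 0 ms j by rewrite D_eq EJ.
  rewrite (recast_const _ _ E0) EJ (proj_mk _ Hmne Hmpos Hj HD).
  have Ha := alpha_start j Hj.
  by rewrite (recast_alpha _ Ha).
- have [EJ [He Ho]] := omega_end j Hj.
  have Hoff : block_off As j = off j := As_off j (ltnW Hj).
  have Hsz0 : 0 < size (nth [::] As j) by rewrite lt0n size_eq0.
  have Ee : off j + (size (nth [::] As j)).-1 = (off j.+1).-1.
    rewrite As_nth_size //; move: (off j) (off j.+1) (off_lt j Hj) => a b Hab; lia.
  have E0 : nth 0 (nth [::] As j) (size (nth [::] As j)).-1 = nth 0 ns (off j.+1).-1.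
    by rewrite HA ?ltn_predL // Hoff Ee.
  rewrite /fs (shift_nomega _ _ HAne (As_pos j Hj)) Hoff Ee (F1' _ _ _ (comega _) He E0).
  have HD : D (off j.+1).-1 = nth 0 ms j by rewrite D_eq EJ.
  rewrite (recast_const _ _ E0) EJ (proj_mk _ Hmne Hmpos Hj HD).
  by rewrite (recast_omega' HD Ho).
Qed.

Lemma NC i e : i < size ns -> proj1_sig (G i) = cconst _ _ e -> bead_const f i.
Proof.
move=> Hi HG; exists (f 0 (bead ns i (calpha _))) => n x.
rewrite !F1 // act_mkp; last by rewrite /= D_eq.
  2: by rewrite /= nbl J_lt.
rewrite /actp /=; congr mkp; congr pair; congr existT; apply: cube_eq.
by apply/ffunP => y; rewrite /= !ffunE HG !ffunE.
Qed.

Lemma blockJ_of (Bs : seq (seq nat))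
  (gs : forall j n, ncell (nth [::] Bs j) n -> ncell [:: nth 0 ms j] n) :
  (forall i, i < size ns -> ~ bead_const f i) ->
  size Bs = size ms -> all (fun A => A != [::]) Bs -> flatten Bs = ns ->
  (forall j, j < size ms -> forall n (c : ncell (nth [::] Bs j) n),
      f n (shift ns (block_off Bs j) c) = shift ms j (gs j n c)) ->
  blockJ Bs J.
Proof.
move=> Hnc HBs HBne HBf Heq j i' Hj Hi'.
have [Hlt Hnth] := nth_flatten_block Hj Hi'; rewrite HBf in Hlt Hnth.
set A := nth [::] Bs j in Hi' Hnth gs Heq *.
set i := block_off Bs j + i' in Hlt Hnth *.
have HAne : A != [::] by rewrite -size_eq0 -lt0n; apply: leq_ltn_trans Hi'.
have HApos : all (fun d => 0 < d) A.
  apply/allP => x Hx; apply: (allP Hpos); rewrite -HBf.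
  by apply/flattenP; exists A => //; apply: mem_nth.
have Hpi : 0 < nth 0 ns i by apply: pos_nth.
pose x := mkp A (i', existT _ (nth 0 ns i) (idc (nth 0 ns i))).
have Vx : proj1_sig x = (i', existT _ (nth 0 ns i) (idc (nth 0 ns i))).
  rewrite val_mkp ?nbeadsE //= -?Hnth // npE //; last exact: ltnW.
  by rewrite is_alpha_idc ?andbF.
have Hsx : shift ns (block_off Bs j) x = bead ns i (idc _).
  by rewrite /shift Vx.
have Hj' : j < size ms by rewrite -HBs.
have := Heq j Hj' _ x; rewrite Hsx -/(cc i) -(cell1 (gs j _ x)).
set y := recast _ _.
move/(congr1 (@proj1_sig _ _)).
rewrite cc_val /shift.
change (proj1_sig (bead [:: nth 0 ms j] 0 y)) with (proj1_sig (mkp [:: nth 0 ms j] (0, existT _ _ y))).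
rewrite val_mkp //= addn0.
change (mkcell ms j y) with (mkp ms (j, existT _ _ y)).
rewrite val_ms //.
case: andP => [[Hj0 Ha]|_] E; have /= E1 := congr1 fst E; have /existT_map [E2 E3] := congr1 snd E.
  exfalso; apply: (Hnc i Hlt); apply: (NC i true Hlt).
  by apply/eqP; rewrite E3 eqxx.
exact: E1.
Qed.

Lemma P2exists : exists (As0 : seq (seq nat))
  (fs0 : forall j n, ncell (nth [::] As0 j) n -> ncell [:: nth 0 ms j] n),
  [/\ size As0 = size ms, all (fun A => A != [::]) As0, flatten As0 = ns,
      forall j, j < size ms -> is_nec_map (fs0 j) &
      forall j, j < size ms -> forall n (c : ncell (nth [::] As0 j) n),
        f n (shift ns (block_off As0 j) c) = shift ms j (fs0 j n c)].
Proof.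
exists As, fs; split.
- exact: As_size.
- exact: As_ne.
- exact: As_flat.
- exact: fs_nec.
- by move=> j Hj n c; apply: fs_eq.
Qed.

Lemma P2uniq : (forall i, i < size ns -> ~ bead_const f i) ->
  forall (As0 : seq (seq nat))
  (fs0 : forall j n, ncell (nth [::] As0 j) n -> ncell [:: nth 0 ms j] n)
  (Bs : seq (seq nat))
  (gs : forall j n, ncell (nth [::] Bs j) n -> ncell [:: nth 0 ms j] n),
  [/\ size As0 = size ms, all (fun A => A != [::]) As0, flatten As0 = ns,
      forall j, j < size ms -> is_nec_map (fs0 j) &
      forall j, j < size ms -> forall n (c : ncell (nth [::] As0 j) n),
        f n (shift ns (block_off As0 j) c) = shift ms j (fs0 j n c)] ->
  [/\ size Bs = size ms, all (fun A => A != [::]) Bs, flatten Bs = ns,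
      forall j, j < size ms -> is_nec_map (gs j) &
      forall j, j < size ms -> forall n (c : ncell (nth [::] Bs j) n),
        f n (shift ns (block_off Bs j) c) = shift ms j (gs j n c)] ->
  As0 = Bs /\
  forall j n (x : ncell (nth [::] As0 j) n) (y : ncell (nth [::] Bs j) n),
    j < size ms -> proj1_sig x = proj1_sig y ->
    proj1_sig (fs0 j n x) = proj1_sig (gs j n y).
Proof.
move=> Hnc As0 fs0 Bs gs [HAs HAne HAf _ HAeq] [HBs HBne HBf _ HBeq].
have JA := blockJ_of As0 fs0 Hnc HAs HAne HAf HAeq.
have JB := blockJ_of Bs gs Hnc HBs HBne HBf HBeq.
have E : As0 = Bs.
  by apply: (blocks_uniq (J := J)) => //; rewrite ?HAf ?HBf ?HAs ?HBs.
split => //; subst Bs.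
move=> j n x y Hj Exy.
have -> : x = y by apply: val_inj.
congr (proj1_sig _); apply: (shift1_inj Hmne Hmpos Hj).
by rewrite -HAeq // -HBeq.
Qed.
End P2.


Theorem proposition2p2 :
  (* (1) maps (n_1,...,n_k) -> (m) *)
  (forall (ns : seq nat) (m : nat),
     ns != [::] -> all (fun d => 0 < d) ns -> 0 < m ->
     forall F : forall n, ncell ns n -> ncell [:: m] n,
     is_nec_map F ->
     let P := fun phi : forall i n, cube n (nth 0 ns i) -> cube n m =>
       [/\ forall i, i < size ns -> is_natural (X := rep (nth 0 ns i)) (Y := rep m) (phi i),
           phi 0 0 (calpha _) = calpha m,
           forall i, i.+1 < size ns -> phi i 0 (comega _) = phi i.+1 0 (calpha _),
           phi (size ns).-1 0 (comega _) = comega m &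
           forall i n (x : cube n (nth 0 ns i)), i < size ns ->
             F n (bead ns i x) = bead [:: m] 0 (phi i n x)] in
     (exists phi, P phi) /\
     (forall phi psi, P phi -> P psi ->
        forall i n (x : cube n (nth 0 ns i)), i < size ns -> phi i n x = psi i n x) /\
     m <= sumn ns)
  /\
  (* (2) maps (n_1,...,n_k) -> (m_1,...,m_l) *)
  (forall (ns ms : seq nat),
     ns != [::] -> all (fun d => 0 < d) ns ->
     ms != [::] -> all (fun d => 0 < d) ms ->
     forall f : forall n, ncell ns n -> ncell ms n,
     is_nec_map f ->
     let Q := fun (As : seq (seq nat))
                  (fs : forall j n, ncell (nth [::] As j) n -> ncell [:: nth 0 ms j] n) =>
       [/\ size As = size ms, all (fun A => A != [::]) As, flatten As = ns,
           forall j, j < size ms -> is_nec_map (fs j) &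
           forall j, j < size ms -> forall n (c : ncell (nth [::] As j) n),
             f n (shift ns (block_off As j) c) = shift ms j (fs j n c)] in
     (exists As fs, Q As fs) /\
     ((forall i, i < size ns -> ~ bead_const f i) ->
      forall As fs Bs gs, Q As fs -> Q Bs gs ->
        As = Bs /\
        forall j n (x : ncell (nth [::] As j) n) (y : ncell (nth [::] Bs j) n),
          j < size ms -> proj1_sig x = proj1_sig y ->
          proj1_sig (fs j n x) = proj1_sig (gs j n y))).
Proof.
split; first exact: part1.
move=> ns ms Hne Hpos Hmne Hmpos f Hf Q; split.
  by apply: P2exists.
by move=> Hnc; apply: P2uniq.
Qed.
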